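(* Let $G$ be a $(P_6,C_5)$-free graph. If $G$ admits a nice coloring, then $G$ is 4-colorable.
   Context: Graphs are finite and simple. A graph is $(P_6,C_5)$-free if it has no induced 6-vertex path and no induced 5-cycle. A partial 4-coloring of $G$ assigns colors from $\{1,2,3,4\}$ to some of the vertices so that adjacent colored vertices get different colors; the other vertices are uncolored. A partial 4-coloring $c$ is nice if (N1) the set of uncolored vertices is an independent set, and (N2) for every uncolored vertex $y$, letting $U=\{u\in N(y): c(u)\in\{1,2\}\}$ and $W=\{w\in N(y): c(w)\in\{3,4\}\}$, we have $N(y)=U\cup W$ and at least one of $U,W$ is an independent set (possibly empty). *)

(* Defs.v *)
From mathcomp Require Import all_boot.
Set Implicit Arguments. Unset Strict Implicit. Unset Printing Implicit Defensive.

Definition simple_graph (T : finType) (e : rel T) : Prop :=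
  symmetric e /\ irreflexive e.

Definition has_induced_P6 (T : finType) (e : rel T) : Prop :=
  exists v : 'I_6 -> T, injective v /\
    forall i j : 'I_6, e (v i) (v j) = ((i.+1 == j :> nat) || (j.+1 == i :> nat)).

Definition has_induced_C5 (T : finType) (e : rel T) : Prop :=
  exists v : 'I_5 -> T, injective v /\
    forall i j : 'I_5, e (v i) (v j) =
      ((i.+1 %% 5 == j :> nat) || (j.+1 %% 5 == i :> nat)).

Definition P6_C5_free (T : finType) (e : rel T) : Prop :=
  ~ has_induced_P6 e /\ ~ has_induced_C5 e.

(* Partial 4-coloring: c x = None means x uncolored; c x = Some k means colour k+1
   (so ordinals 0,1 are the paper's colours 1,2 and ordinals 2,3 are colours 3,4). *)
Definition partial_4coloring (T : finType) (e : rel T) (c : T -> option 'I_4) : Prop :=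
  forall x y, e x y -> c x <> None -> c y <> None -> c x <> c y.

Definition independent (T : finType) (e : rel T) (S : pred T) : Prop :=
  forall x y, S x -> S y -> ~~ e x y.

Definition col12 (c : option 'I_4) : bool :=
  if c is Some k then (k < 2)%N else false.
Definition col34 (c : option 'I_4) : bool :=
  if c is Some k then (2 <= k)%N else false.

Definition nice_coloring (T : finType) (e : rel T) (c : T -> option 'I_4) : Prop :=
  partial_4coloring e c /\
  independent e (fun x => c x == None) /\
  (forall y, c y = None ->
     let U := fun u => e y u && col12 (c u) in
     let W := fun w => e y w && col34 (c w) in
     (forall u, e y u -> U u || W u) /\
     (independent e U \/ independent e W)).

Definition four_colorable (T : finType) (e : rel T) : Prop :=
  exists f : T -> 'I_4, forall x y, e x y -> f x != f y.

(* Main.v *)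
Require Import Defs.
From mathcomp Require Import all_boot.
Set Implicit Arguments. Unset Strict Implicit. Unset Printing Implicit Defensive.

Lemma path_nth_drop (T : Type) (r : rel T) x p i :
  path r x p -> path r (nth x (x :: p) i) (drop i p).
Proof.
elim: p x i => [|a p IH] x [|i] //= Hp.
case/andP: Hp => _ /(IH a i).
case: (leqP i (size p)) => Hi; first by rewrite (set_nth_default a).
by rewrite drop_oversize // ltnW.
Qed.

Lemma last_take_nth (T : Type) x (p : seq T) i :
  i <= size p -> last x (take i p) = nth x (x :: p) i.
Proof.
elim: p x i => [|a p IH] x [|i] //= Hi. by rewrite IH // (set_nth_default a).
Qed.

Lemma last_drop_nth (T : Type) x (p : seq T) i :
  i <= size p -> last (nth x (x :: p) i) (drop i p) = last x p.
Proof.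
elim: p x i => [|a p IH] x [|i] //= Hi. by rewrite (set_nth_default a) // IH.
Qed.

Lemma shortcut (T : Type) (r : rel T) x p i j :
  path r x p -> i < j -> j <= size p ->
  r (nth x (x :: p) i) (nth x (x :: p) j) ->
  [/\ path r x (take i p ++ drop j.-1 p),
      last x (take i p ++ drop j.-1 p) = last x p &
      size (take i p ++ drop j.-1 p) = i + (size p - j.-1)].
Proof.
move=> Hp Hij Hj Hr.
have Hi : i <= size p by apply: ltnW; apply: leq_trans Hj.
have j0 : 0 < j by apply: leq_ltn_trans Hij.
have Hd : drop j.-1 p = nth x (x :: p) j :: drop j p.
  rewrite (drop_nth x); last by rewrite prednK.
  by case: j j0 {Hij Hj Hr} => // j _ /=.
split.
- rewrite cat_path take_path //= last_take_nth // Hd /= Hr /=.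
  exact: path_nth_drop.
- by rewrite last_cat last_take_nth // Hd /= -(last_drop_nth x Hj).
- by rewrite size_cat size_takel // size_drop.
Qed.

Definition pat6 (i j : 'I_6) := (i.+1 == j :> nat) || (j.+1 == i :> nat).
Definition pat5 (i j : 'I_5) := (i.+1 %% 5 == j :> nat) || (j.+1 %% 5 == i :> nat).

Definition npat6 (i j : nat) := (i.+1 == j) || (j.+1 == i).
Definition npat5 (i j : nat) := (i.+1 %% 5 == j) || (j.+1 %% 5 == i).
Lemma key_gen (n : nat) (np : nat -> nat -> bool) :
  all (fun i => all (fun j => (i == j) || np i j ||
     has (fun k => np i k != np j k) (iota 0 n)) (iota 0 n)) (iota 0 n) ->
  forall i j : 'I_n, (i == j) || np i j || [exists k : 'I_n, np i k != np j k].
Proof.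
move=> /allP H i j.
have Hi : (i : nat) \in iota 0 n by rewrite mem_iota /=.
have /allP /(_ j) := H i Hi.
rewrite mem_iota /= ltn_ord => /(_ isT) /orP [-> //|/hasP [k]].
rewrite mem_iota /= => Hk Hne; apply/orP; right; apply/existsP.
by exists (Ordinal Hk).
Qed.
Lemma key6 (i j : 'I_6) : (i == j) || pat6 i j || [exists k : 'I_6, pat6 i k != pat6 j k].
Proof. exact: (@key_gen 6 npat6). Qed.
Lemma key5 (i j : 'I_5) : (i == j) || pat5 i j || [exists k : 'I_5, pat5 i k != pat5 j k].
Proof. exact: (@key_gen 5 npat5). Qed.

Lemma mkP6 (T : finType) (e : rel T) (a0 a1 a2 a3 a4 a5 : T) :
  simple_graph e ->
  e a0 a1 -> e a1 a2 -> e a2 a3 -> e a3 a4 -> e a4 a5 ->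
  ~~ e a0 a2 -> ~~ e a0 a3 -> ~~ e a0 a4 -> ~~ e a0 a5 ->
  ~~ e a1 a3 -> ~~ e a1 a4 -> ~~ e a1 a5 ->
  ~~ e a2 a4 -> ~~ e a2 a5 -> ~~ e a3 a5 -> has_induced_P6 e.
Proof.
move=> [Hs Hi] h01 h12 h23 h34 h45 h02 h03 h04 h05 h13 h14 h15 h24 h25 h35.
pose v (i : 'I_6) := nth a0 [:: a0; a1; a2; a3; a4; a5] i.
have E : forall i j, e (v i) (v j) = pat6 i j.
  move=> [[|[|[|[|[|[|i]]]]]] Hi'] [[|[|[|[|[|[|j]]]]]] Hj] //=;
  rewrite /v /pat6 /= ?Hi ?h01 ?h12 ?h23 ?h34 ?h45 ?(negbTE h02) ?(negbTE h03) ?(negbTE h04) ?(negbTE h05) ?(negbTE h13) ?(negbTE h14) ?(negbTE h15) ?(negbTE h24) ?(negbTE h25) ?(negbTE h35) //;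
  rewrite Hs ?h01 ?h12 ?h23 ?h34 ?h45 ?(negbTE h02) ?(negbTE h03) ?(negbTE h04) ?(negbTE h05) ?(negbTE h13) ?(negbTE h14) ?(negbTE h15) ?(negbTE h24) ?(negbTE h25) ?(negbTE h35) //.
exists v; split => // i j Hvij.
have := key6 i j.
rewrite -E Hvij Hi orbF => /orP [/eqP //|/existsP [k]].
by rewrite -!E Hvij eqxx.
Qed.

Lemma mkC5 (T : finType) (e : rel T) (a0 a1 a2 a3 a4 : T) :
  simple_graph e ->
  e a0 a1 -> e a1 a2 -> e a2 a3 -> e a3 a4 -> e a4 a0 ->
  ~~ e a0 a2 -> ~~ e a0 a3 -> ~~ e a1 a3 -> ~~ e a1 a4 -> ~~ e a2 a4 ->
  has_induced_C5 e.
Proof.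
move=> [Hs Hi] h01 h12 h23 h34 h40 h02 h03 h13 h14 h24.
pose v (i : 'I_5) := nth a0 [:: a0; a1; a2; a3; a4] i.
have E : forall i j, e (v i) (v j) = pat5 i j.
  move=> [[|[|[|[|[|i]]]]] Hi'] [[|[|[|[|[|j]]]]] Hj] //=;
  rewrite /v /pat5 /= ?Hi ?h01 ?h12 ?h23 ?h34 ?h40 ?(negbTE h02) ?(negbTE h03) ?(negbTE h13) ?(negbTE h14) ?(negbTE h24) //;
  rewrite Hs ?h01 ?h12 ?h23 ?h34 ?h40 ?(negbTE h02) ?(negbTE h03) ?(negbTE h13) ?(negbTE h14) ?(negbTE h24) //.
exists v; split => // i j Hvij.
have := key5 i j.
rewrite -E Hvij Hi orbF => /orP [/eqP //|/existsP [k]].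
by rewrite -!E Hvij eqxx.
Qed.

From mathcomp Require Import zify.

Definition r12 (T : finType) (e : rel T) (c : T -> option 'I_4) : rel T :=
  [rel a b | e a b && col12 (c a) && col12 (c b)].

Lemma col3 (a b d : option 'I_4) : col12 a -> col12 b -> col12 d -> a <> b -> b <> d -> a = d.
Proof.
by case: a => [[[|[|?]] ?]|] //; case: b => [[[|[|?]] ?]|] //; case: d => [[[|[|?]] ?]|] //;
 move=> _ _ _ H1 H2;
 first [by congr Some; apply: val_inj | by exfalso; apply: H1; congr Some; apply: val_inj
       | by exfalso; apply: H2; congr Some; apply: val_inj].
Qed.

Lemma col12_some (a : option 'I_4) : col12 a -> a <> None.
Proof. by case: a. Qed.

Lemma core_ind (T : finType) (e : rel T) (c : T -> option 'I_4) (y : T) :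
  simple_graph e -> P6_C5_free e -> partial_4coloring e c ->
  independent e (fun u => e y u && col12 (c u)) ->
  forall n u1 u2 p, size p < n -> e y u1 -> col12 (c u1) -> e y u2 -> col12 (c u2) ->
  c u1 <> c u2 -> path (r12 e c) u1 p -> u2 = last u1 p -> False.
Proof.
move=> [Hs Hirr] [nP6 nC5] Hpc Hind.
elim=> [//|n IH] u1 u2 p Hn Hy1 Hc1 Hy2 Hc2 Hne Hp Hl.
pose k := size p.
pose s i := nth u1 (u1 :: p) i.
have s0 : s 0 = u1 by [].
have sk : s k = u2.
  by rewrite Hl /s /k -[size p]/((size (u1 :: p)).-1) nth_last.
have hr : forall i, i < k -> r12 e c (s i) (s i.+1).
  by move=> i Hi; move/(pathP u1): Hp => /(_ i Hi).
have hcol : forall i, i <= k -> col12 (c (s i)).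
  case=> [|i] Hi; first by rewrite s0.
  by have := hr i Hi => /andP [] /andP [].
have hedge : forall i, i < k -> e (s i) (s i.+1) /\ c (s i) <> c (s i.+1).
  move=> i Hi; have /andP [/andP [He H1] H2] := hr i Hi; split => //.
  by apply: Hpc => //; apply: col12_some.
have hchord : forall i j, i.+1 < j -> j <= k -> ~~ e (s i) (s j).
  move=> i j Hij Hj; apply/negP => He.
  have Hr : r12 e c (s i) (s j).
    by rewrite /r12 /= He !hcol //; lia.
  have [P1 P2 P3] := shortcut Hp (ltnW Hij) Hj Hr.
  apply: (IH u1 u2 _ _ Hy1 Hc1 Hy2 Hc2 Hne P1); last by rewrite P2.
  rewrite P3; rewrite /k in Hj; lia.
have hint : forall i, 0 < i < k -> ~~ e y (s i).
  move=> i /andP [Hi0 Hik]; apply/negP => Hey.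
  have Hci := hcol i (ltnW Hik).
  case: (eqVneq (c (s i)) (c u1)) => Heq.
  - apply: (IH (s i) u2 (drop i p) _ Hey Hci Hy2 Hc2 _ (path_nth_drop i Hp)).
    + rewrite size_drop; rewrite /k in Hik; lia.
    + by rewrite Heq.
    + by rewrite last_drop_nth // ltnW.
  - apply: (IH u1 (s i) (take i p) _ Hy1 Hc1 Hey Hci _ (take_path i Hp)).
    + rewrite size_takel; rewrite /k in Hik; [lia|exact: ltnW].
    + by move=> H; rewrite H eqxx in Heq.
    + by rewrite last_take_nth // ltnW.
have Hu12 : ~~ e u1 u2 by apply: Hind; rewrite ?Hy1 ?Hc1 ?Hy2 ?Hc2.
have Hk : k < n.+1 by [].
move: Hk hr hcol hedge hchord hint sk.
case: k => [|[|[|[|[|k]]]]] Hk hr hcol hedge hchord hint sk.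
- by apply: Hne; rewrite -sk.
- by have [] := hedge 0 isT; rewrite s0 sk (negbTE Hu12).
- apply: Hne; rewrite -sk -s0.
  have [_ h0] := hedge 0 isT; have [_ h1] := hedge 1 isT.
  exact: col3 (hcol 0 isT) (hcol 1 isT) (hcol 2 isT) h0 h1.
- apply: nC5; apply: (@mkC5 _ _ y (s 0) (s 1) (s 2) (s 3) (conj Hs Hirr)) => //;
    try exact: hint; try exact: hchord.
  + exact: (proj1 (hedge 0 isT)).
  + exact: (proj1 (hedge 1 isT)).
  + exact: (proj1 (hedge 2 isT)).
  + by rewrite Hs sk.
- apply: Hne; rewrite -sk -s0.
  have [_ h0] := hedge 0 isT; have [_ h1] := hedge 1 isT.
  have [_ h2] := hedge 2 isT; have [_ h3] := hedge 3 isT.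
  rewrite (col3 (hcol 0 isT) (hcol 1 isT) (hcol 2 isT) h0 h1).
  exact: col3 (hcol 2 isT) (hcol 3 isT) (hcol 4 isT) h2 h3.
- apply: nP6; apply: (@mkP6 _ _ y (s 0) (s 1) (s 2) (s 3) (s 4) (conj Hs Hirr)) => //;
    try exact: hint; try exact: hchord.
  + exact: (proj1 (hedge 0 isT)).
  + exact: (proj1 (hedge 1 isT)).
  + exact: (proj1 (hedge 2 isT)).
  + exact: (proj1 (hedge 3 isT)).
Qed.

Definition tn (n : nat) := if n < 2 then 1 - n else n.
Lemma tn_lt (k : 'I_4) : tn k < 4.
Proof. rewrite /tn; case: ifP => [_|_]; [exact: leq_ltn_trans (leq_subr _ _) _|exact: ltn_ord]. Qed.
Definition tau (k : 'I_4) : 'I_4 := Ordinal (tn_lt k).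
Definition sig (k : 'I_4) : 'I_4 := Ordinal (ltn_pmod (k + 2) (isT : 0 < 4)).
Definition o0 : 'I_4 := Ordinal (isT : 0 < 4).
Definition o1 : 'I_4 := Ordinal (isT : 1 < 4).

Lemma tauK k : tau (tau k) = k.
Proof. by apply: val_inj; case: k => [[|[|[|[|?]]]] ?]. Qed.
Lemma sigK k : sig (sig k) = k.
Proof. by apply: val_inj; case: k => [[|[|[|[|?]]]] ?]. Qed.
Lemma col12_tau o : col12 (omap tau o) = col12 o.
Proof. by case: o => [[[|[|[|[|?]]]] ?]|]. Qed.
Lemma col34_tau o : col34 (omap tau o) = col34 o.
Proof. by case: o => [[[|[|[|[|?]]]] ?]|]. Qed.
Lemma col12_sig o : col12 (omap sig o) = col34 o.
Proof. by case: o => [[[|[|[|[|?]]]] ?]|]. Qed.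
Lemma col34_sig o : col34 (omap sig o) = col12 o.
Proof. by case: o => [[[|[|[|[|?]]]] ?]|]. Qed.
Lemma tau_o1 : tau o1 = o0. Proof. exact: val_inj. Qed.
Lemma col12_cases o : col12 o -> o = Some o0 \/ o = Some o1.
Proof.
case: o => [[[|[|?]] Hk]|] // _; [left|right]; congr Some; exact: val_inj.
Qed.
Lemma omap_inj (f : 'I_4 -> 'I_4) : cancel f f -> injective (omap f).
Proof. by move=> fK [a|] [b|] //= [] /(can_inj fK) ->. Qed.

Lemma indep_ext (T : finType) (e : rel T) (P Q : T -> bool) :
  (forall x, P x = Q x) -> independent e P -> independent e Q.
Proof. by move=> H HP x z; rewrite -!H; apply: HP. Qed.

Lemma step (T : finType) (e : rel T) (c : T -> option 'I_4) (y : T) :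
  simple_graph e -> P6_C5_free e -> nice_coloring e c -> c y = None ->
  independent e (fun u => e y u && col12 (c u)) ->
  exists c', nice_coloring e c' /\
    #|[pred x | c' x == None]| < #|[pred x | c x == None]|.
Proof.
move=> [Hs Hirr] Hfree [Hpc [HN1 HN2]] Hy HU.
pose inS x := col12 (c x) &&
  [exists u, [&& e y u, c u == Some o1 & connect (r12 e c) u x]].
pose c' x := if x == y then Some o1 else if inS x then omap tau (c x) else c x.
have F1 : forall x, x != y ->
   [/\ col12 (c' x) = col12 (c x), col34 (c' x) = col34 (c x) &
       (c' x == None) = (c x == None)].
  move=> x /negbTE Hx; rewrite /c' Hx; case: (inS x) => //.
  by rewrite col12_tau col34_tau; case: (c x).
have F2 : forall u, e y u -> c u = Some o0 -> ~~ inS u.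
  move=> u Hyu Hcu; apply/negP => /andP [_ /existsP [u' /and3P [Hyu' /eqP Hcu' /connectP [p Hp Hl]]]].
  apply: (core_ind (conj Hs Hirr) Hfree Hpc HU (n := (size p).+1) _ Hyu' _ Hyu _ _ Hp Hl) => //.
  - by rewrite Hcu'.
  - by rewrite Hcu.
  - by rewrite Hcu Hcu'.
have Hyne : forall z, e y z -> z != y.
  by move=> z Hz; apply/eqP => E; rewrite E Hirr in Hz.
have Hnb : forall z, e y z -> c z <> None.
  move=> z Hz Hcz; have := HN1 y z; rewrite Hy Hcz eqxx => /(_ isT isT).
  by rewrite Hz.
have Hy' : forall z, e y z -> c' z <> Some o1.
  move=> z Hz; have Hzy := Hyne z Hz.
  have [Hcov _] := HN2 y Hy.
  have /orP [/andP [_ H12] | /andP [_ H34]] := Hcov z Hz.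
  - case: (col12_cases H12) => E.
    + have nS := F2 z Hz E.
      by rewrite /c' (negbTE Hzy) (negbTE nS) E => -[].
    + have iS : inS z.
        by rewrite /inS H12 /=; apply/existsP; exists z; rewrite Hz E eqxx connect0.
      by rewrite /c' (negbTE Hzy) iS E /= tau_o1 => -[].
  - by have [_ H _] := F1 z Hzy; move=> E; rewrite -H E in H34.
have Ey : c' y = Some o1 by rewrite /c' eqxx.
have Hdef : forall x, x != y -> c' x = if inS x then omap tau (c x) else c x.
  by move=> x /negbTE Hx; rewrite /c' Hx.
have mixed : forall x z, e x z -> x != y -> z != y -> inS x -> ~~ inS z -> c' x <> c' z.
  move=> x z Hxz Hx Hz iSx nSz.
  rewrite (Hdef x Hx) (Hdef z Hz) iSx (negbTE nSz).
  case/andP: iSx => Hc12 /existsP [u /and3P [Hyu Hcu Hcon]].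
  have Hcz : ~~ col12 (c z).
    apply/negP => Hc12z; move/negP: nSz; apply; rewrite /inS Hc12z /=.
    apply/existsP; exists u; rewrite Hyu Hcu /=.
    by apply: connect_trans Hcon (connect1 _); rewrite /r12 /= Hxz Hc12 Hc12z.
  by move=> E; rewrite -E col12_tau Hc12 in Hcz.
exists c'; split; [split; [|split] | ].
- move=> x z Hxz Hx Hz.
  case: (eqVneq x y) => [Exy|Hxy].
    move: Hxz; rewrite Exy Ey => Hyz E; apply: (Hy' z Hyz); by rewrite -E.
  case: (eqVneq z y) => [Ezy|Hzy].
    move: Hxz; rewrite Ezy Ey Hs => Hyx E; apply: (Hy' x Hyx); by rewrite E.
  have Hcx : c x <> None.
    by move=> E; have [_ _] := F1 x Hxy; rewrite E eqxx => /eqP.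
  have Hcz : c z <> None.
    by move=> E; have [_ _] := F1 z Hzy; rewrite E eqxx => /eqP.
  case: (boolP (inS x)) => iSx; case: (boolP (inS z)) => iSz.
  + rewrite (Hdef x Hxy) (Hdef z Hzy) iSx iSz => /(omap_inj tauK).
    exact: Hpc.
  + exact: mixed.
  + move=> E; apply: (mixed z x) => //; by rewrite Hs.
  + rewrite (Hdef x Hxy) (Hdef z Hzy) (negbTE iSx) (negbTE iSz).
    exact: Hpc.
- have HNy : forall x, c' x == None -> x != y /\ c x == None.
    move=> x Hx; have Hxy : x != y by apply/eqP => E; rewrite E Ey in Hx.
    by split => //; have [_ _ <-] := F1 x Hxy.
  move=> x z /HNy [_ Hx] /HNy [_ Hz]; exact: HN1.
- move=> w Hw /=.
  have [Hwy /eqP Hcw] : w != y /\ c w == None.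
    have Hxy : w != y by apply/eqP => E; rewrite E Ey in Hw.
    by split => //; have [_ _ <-] := F1 w Hxy; rewrite Hw.
  have Hnbr : forall u, e w u -> u != y.
    move=> u Hu; apply/eqP => E; have := HN1 w y; rewrite Hcw Hy eqxx -E Hu.
    by move/(_ isT isT).
  have EU : forall u, (e w u && col12 (c' u)) = (e w u && col12 (c u)).
    by move=> u; case: (boolP (e w u)) => //= H; have [-> _ _] := F1 u (Hnbr u H).
  have EW : forall u, (e w u && col34 (c' u)) = (e w u && col34 (c u)).
    by move=> u; case: (boolP (e w u)) => //= H; have [_ -> _] := F1 u (Hnbr u H).
  have [Hcov Hind] := HN2 w Hcw.
  split.
    by move=> u Hu; rewrite EU EW; exact: Hcov.
  case: Hind => H; [left|right]; apply: indep_ext H => u; by rewrite ?EU ?EW.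
- apply: proper_card; apply/properP; split.
    apply/subsetP => x; rewrite !inE => Hx.
    have Hxy : x != y by apply/eqP => E; rewrite E Ey in Hx.
    by have [_ _ <-] := F1 x Hxy.
  by exists y; rewrite !inE ?Hy ?Ey.
Qed.

Lemma transfer (T : finType) (e : rel T) (c : T -> option 'I_4) :
  nice_coloring e c -> nice_coloring e (fun x => omap sig (c x)).
Proof.
move=> [Hpc [HN1 HN2]].
have HNone : forall o : option 'I_4, (omap sig o == None) = (o == None) by case.
split; [|split].
- move=> x z Hxz Hx Hz /(omap_inj sigK); apply: Hpc => // E; by rewrite E in Hx Hz.
- by move=> x z; rewrite !HNone; apply: HN1.
- move=> w Hw /=.
  have Hcw : c w = None by apply/eqP; rewrite -HNone Hw.
  have [Hcov Hind] := HN2 w Hcw.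
  split.
    by move=> u Hu; rewrite col12_sig col34_sig orbC; exact: Hcov.
  case: Hind => H; [right|left]; apply: indep_ext H => u;
    by rewrite ?col12_sig ?col34_sig.
Qed.

Lemma main_ind (T : finType) (e : rel T) :
  simple_graph e -> P6_C5_free e ->
  forall n (c : T -> option 'I_4), nice_coloring e c ->
  #|[pred x | c x == None]| < n -> four_colorable e.
Proof.
move=> Hsg Hfree; elim=> [//|n IH] c Hc Hn.
case: (pickP [pred x | c x == None]) => [y /= /eqP Hy | H0].
- have [Hpc [HN1 HN2]] := Hc.
  have [_ [HU|HW]] := HN2 y Hy.
  + have [c' [Hc' Hlt]] := step Hsg Hfree Hc Hy HU.
    apply: (IH c' Hc'); exact: leq_trans Hlt Hn.
  + pose c1 x := omap sig (c x).
    have Hc1 : nice_coloring e c1 by apply: transfer.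
    have Hy1 : c1 y = None by rewrite /c1 Hy.
    have HU1 : independent e (fun u => e y u && col12 (c1 u)).
      by apply: indep_ext HW => u; rewrite /c1 col12_sig.
    have [c' [Hc' Hlt]] := step Hsg Hfree Hc1 Hy1 HU1.
    apply: (IH c' Hc'); apply: leq_trans Hlt _.
    have -> : #|[pred x | c1 x == None]| = #|[pred x | c x == None]|.
      by apply: eq_card => x; rewrite !inE /c1; case: (c x).
    exact: Hn.
- have [Hpc _] := Hc.
  exists (fun x => odflt o0 (c x)) => x z Hxz.
  have Hx : c x <> None by move=> E; have := H0 x; rewrite /= E.
  have Hz : c z <> None by move=> E; have := H0 z; rewrite /= E.
  have := Hpc x z Hxz Hx Hz.
  case: (c x) Hx => [a|] // _; case: (c z) Hz => [b|] // _ /= Hab.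
  by apply/eqP => E; apply: Hab; rewrite E.
Qed.

Theorem lemma4 (T : finType) (e : rel T) :
  simple_graph e -> P6_C5_free e ->
  (exists c : T -> option 'I_4, nice_coloring e c) ->
  four_colorable e.
Proof.
move=> Hsg Hfree [c Hc].
exact: (main_ind Hsg Hfree (n := #|[pred x | c x == None]|.+1) Hc).
Qed.
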